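(* Let $\eta>0$ and $(u,v)\in\mathring C$ be such that $u/v$ is at distance at least $\eta$ from each $\mu_i$, $1\le i\le n$. Then for every $x\in\mathbb X_{u,v}$ and every $z\in\mathbb R^N$ with $\langle z,x\rangle=0=\langle z,x\rangle_{-1}$, $$\sum_{J\in\mathcal J}\frac1{|x|^4}\langle T_J(x),z\rangle^2+\sum_{i=1}^n\frac1{|x|^2}\langle R_i(x),z\rangle^2\ge c_1(\eta)|z|^2,$$ where $c_1(\eta)>0$ depends only on $\eta$, $N$ and $(\lambda_\ell)$.
   Context: Let $n\ge4$, $N=2n$, $1=\lambda_1=\lambda_2<\lambda_3=\lambda_4<\dots<\lambda_{N-1}=\lambda_N$, $\mu_i=\lambda_{2i}$. $\langle x,y\rangle=\sum x_\ell y_\ell$, $|x|^2=\sum x_\ell^2$, $\langle x,y\rangle_{-1}=\sum x_\ell y_\ell/\lambda_\ell$, $|x|_{-1}^2=\sum x_\ell^2/\lambda_\ell$. $C=\{(u,v):0\le v\le u\le\lambda_Nv\}$, interior $\mathring C$; $\mathbb X_{u,v}=\{x:|x|^2=u,|x|_{-1}^2=v\}$. $\mathcal J$ is the set of triples $J=(k,\ell,m)$ in $\{1,\dots,N\}$ with $\lambda_k<\lambda_\ell<\lambda_m$, and $T_J(x)$ is the vector $\sum x_ax_b(1/\lambda_a-1/\lambda_b)e_c$, the sum over the three cyclic permutations $(a,b,c)$ of $J$ ($e_c$ the canonical basis); $R_i(x)=x_{2i}e_{2i-1}-x_{2i-1}e_{2i}$, $1\le i\le n$. *)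

(* Defs.v *)
(* Vectors of R^N are represented as functions nat -> R,
   with 0-based indices; only the coordinates 0 .. N-1 are ever used
   (all sums range over l < N). *)
From HB Require Import structures.
From mathcomp Require Import all_boot all_order all_algebra.
From mathcomp Require Import reals.
Set Implicit Arguments. Unset Strict Implicit. Unset Printing Implicit Defensive.
Import Order.TTheory GRing.Theory Num.Theory.
Local Open Scope ring_scope.

Section Defs.
Variable R : realType.

Definition ip (N : nat) (x y : nat -> R) : R := \sum_(l < N) x l * y l.
Definition sqn (N : nat) (x : nat -> R) : R := ip N x x.
Definition ipm (N : nat) (lam : nat -> R) (x y : nat -> R) : R :=
  \sum_(l < N) x l * y l / lam l.
Definition sqnm (N : nat) (lam : nat -> R) (x : nat -> R) : R := ipm N lam x x.

Definition evec (c : nat) : nat -> R := fun j => (j == c)%:R.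

Definition TJ (lam : nat -> R) (k l m : nat) (x : nat -> R) : nat -> R :=
  fun j => x k * x l * ((lam k)^-1 - (lam l)^-1) * evec m j
         + x l * x m * ((lam l)^-1 - (lam m)^-1) * evec k j
         + x m * x k * ((lam m)^-1 - (lam k)^-1) * evec l j.

(* R_i(x) = x_{2i} e_{2i-1} - x_{2i-1} e_{2i} (1-based i);
   with 0-based i in 0..n-1 and 0-based coordinates this is
   x_{2i+1} e_{2i} - x_{2i} e_{2i+1}. *)
Definition Rvec (i : nat) (x : nat -> R) : nat -> R :=
  fun j => x (2 * i).+1 * evec (2 * i) j - x (2 * i) * evec (2 * i).+1 j.

End Defs.

(* Main.v *)
Require Import Defs.
From HB Require Import structures.
From mathcomp Require Import all_boot all_order all_algebra.
From mathcomp Require Import reals.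
From mathcomp.algebra_tactics Require Import ring lra.
From mathcomp Require Import zify.
Import Order.TTheory GRing.Theory Num.Theory.
Local Open Scope ring_scope.
Set Implicit Arguments. Unset Strict Implicit.

Section H.
Variable R : realType.
Implicit Types (x z : nat -> R) (lam : nat -> R).

Definition wv lam x (l : nat) : R := x l / lam l.
Definition Dd lam x z (j k l : nat) : R :=
  x j * (wv lam x k * z l - wv lam x l * z k)
  - x k * (wv lam x j * z l - wv lam x l * z j)
  + x l * (wv lam x j * z k - wv lam x k * z j).

Lemma sum_evec (N m : nat) (f : nat -> R) : (m < N)%N ->
  \sum_(j < N) evec R m j * f j = f m.
Proof.
move=> hm; rewrite (bigD1 (Ordinal hm)) //= big1 ?addr0.
  by rewrite /evec eqxx mul1r.
move=> j hj; rewrite /evec.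
have -> : (nat_of_ord j == m) = false.
  apply/negbTE; apply: contra hj => /eqP e; apply/eqP; exact: val_inj.
by rewrite mul0r.
Qed.

Lemma ip_TJ N lam x z (k l m : nat) : (k < N)%N -> (l < N)%N -> (m < N)%N ->
  ip N (TJ lam k l m x) z = - Dd lam x z k l m.
Proof.
move=> hk hl hm; rewrite /ip /TJ.
under eq_bigr => j _ do rewrite !mulrDl -!(mulrA _ (evec R _ j)).
rewrite !big_split /= -!mulr_sumr !sum_evec //.
rewrite /Dd /wv; ring.
Qed.

Lemma ip_Rvec N x z (i : nat) : ((2 * i).+1 < N)%N ->
  ip N (Rvec i x) z = x (2 * i).+1 * z (2 * i) - x (2 * i) * z (2 * i).+1.
Proof.
move=> h; have h' : (2 * i < N)%N by apply: ltn_trans h.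
rewrite /ip /Rvec.
under eq_bigr => j _ do rewrite mulrBl -!(mulrA _ (evec R _ j)).
by rewrite sumrB -!mulr_sumr !sum_evec.
Qed.
End H.

Section H2.
Variable R : realType.
Implicit Types (x z : nat -> R) (lam : nat -> R).

Lemma sum2_fact N (a b : nat -> R) :
  \sum_(k < N) \sum_(l < N) a k * b l = (\sum_(k < N) a k) * (\sum_(l < N) b l).
Proof. rewrite mulr_suml; apply: eq_bigr => k _; by rewrite mulr_sumr. Qed.

Lemma sumD_ge N lam x z (k l : nat) :
  \sum_(j < N) z j * x j = 0 -> \sum_(j < N) z j * x j / lam j = 0 ->
  (x k * wv lam x l - x l * wv lam x k) ^+ 2 * sqn N z <=
  \sum_(j < N) Dd lam x z j k l ^+ 2.
Proof.
move=> h1 h2.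
set P := (x k * wv lam x l - x l * wv lam x k).
set al := (wv lam x k * z l - wv lam x l * z k).
set be := (x l * z k - x k * z l).
have e : forall j, Dd lam x z j k l ^+ 2 =
   P ^+ 2 * (z j * z j) + (al * x j + be * wv lam x j) ^+ 2
   + (2 * P * al) * (z j * x j) + (2 * P * be) * (z j * x j / lam j).
  move=> j; rewrite /Dd /P /al /be /wv; ring.
under eq_bigr => j _ do rewrite e.
rewrite !big_split /= -!mulr_sumr h1 h2 !mulr0 !addr0 /sqn /ip.
rewrite lerDl; apply: sumr_ge0 => j _; exact: sqr_ge0.
Qed.

Lemma Psum N lam x (s : R) :
  \sum_(k < N) \sum_(l < N) (x k * wv lam x l - x l * wv lam x k) ^+ 2 =
  2 * (\sum_(k < N) x k ^+ 2) * (\sum_(l < N) x l ^+ 2 * ((lam l)^-1 - s) ^+ 2)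
  - 2 * (\sum_(k < N) x k ^+ 2 * ((lam k)^-1 - s)) ^+ 2.
Proof.
have e : forall k l, (x k * wv lam x l - x l * wv lam x k) ^+ 2 =
  x k ^+ 2 * (x l ^+ 2 * ((lam l)^-1 - s) ^+ 2)
  + (x k ^+ 2 * ((lam k)^-1 - s) ^+ 2) * x l ^+ 2
  - 2 * ((x k ^+ 2 * ((lam k)^-1 - s)) * (x l ^+ 2 * ((lam l)^-1 - s))).
  move=> k l; rewrite /wv; ring.
under eq_bigr => k _ do under eq_bigr => l _ do rewrite e.
under eq_bigr => k _ do rewrite sumrB big_split /=.
rewrite sumrB big_split /=.
rewrite (sum2_fact N (fun k => x k ^+ 2) (fun l => x l ^+ 2 * ((lam l)^-1 - s) ^+ 2)).
rewrite (sum2_fact N (fun k => x k ^+ 2 * ((lam k)^-1 - s) ^+ 2) (fun l => x l ^+ 2)).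
under eq_bigr => k _ do rewrite -mulr_sumr.
rewrite -mulr_sumr.
rewrite (sum2_fact N (fun k => x k ^+ 2 * ((lam k)^-1 - s)) (fun l => x l ^+ 2 * ((lam l)^-1 - s))).
ring.
Qed.
End H2.

Section H3.
Variable R : realType.
Variable n : nat.
Variable lam : nat -> R.

Lemma mu_step (Hpair : forall i : nat, (i < n)%N -> lam (2 * i)%N = lam (2 * i).+1)
  (Hstep : forall i : nat, (i.+1 < n)%N -> lam (2 * i).+1 < lam (2 * i).+2) i :
  (i.+1 < n)%N -> lam (2 * i).+1 < lam (2 * i.+1).+1.
Proof.
move=> h; rewrite -(Hpair _ h).
have -> : (2 * i.+1 = (2 * i).+2)%N by lia.
exact: Hstep.
Qed.

Lemma mu_lt (Hpair : forall i : nat, (i < n)%N -> lam (2 * i)%N = lam (2 * i).+1)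
  (Hstep : forall i : nat, (i.+1 < n)%N -> lam (2 * i).+1 < lam (2 * i).+2) a b :
  (a < b)%N -> (b < n)%N -> lam (2 * a).+1 < lam (2 * b).+1.
Proof.
elim: b => [//|b IH] hab hb.
have hs := mu_step Hpair Hstep hb.
case: (ltngtP a b) => h.
- apply: lt_trans hs; apply: IH => //; lia.
- lia.
- by rewrite h.
Qed.

Lemma mu_le (Hpair : forall i : nat, (i < n)%N -> lam (2 * i)%N = lam (2 * i).+1)
  (Hstep : forall i : nat, (i.+1 < n)%N -> lam (2 * i).+1 < lam (2 * i).+2) a b :
  (a <= b)%N -> (b < n)%N -> lam (2 * a).+1 <= lam (2 * b).+1.
Proof.
move=> hab hb; case: (ltngtP a b) => h.
- exact/ltW/mu_lt.
- lia.
- by rewrite h.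
Qed.

Lemma lam_half (Hpair : forall i : nat, (i < n)%N -> lam (2 * i)%N = lam (2 * i).+1) j :
  (j < 2 * n)%N -> lam j = lam (2 * (j %/ 2)).+1.
Proof.
move=> hj.
have [ho|he] : (j = (2 * (j %/ 2)).+1)%N \/ (j = 2 * (j %/ 2))%N by lia.
- by rewrite {1}ho.
- rewrite {1}he; apply: Hpair; lia.
Qed.

Lemma lam_bounds (H0 : lam 0%N = 1)
  (Hpair : forall i : nat, (i < n)%N -> lam (2 * i)%N = lam (2 * i).+1)
  (Hstep : forall i : nat, (i.+1 < n)%N -> lam (2 * i).+1 < lam (2 * i).+2) j :
  (j < 2 * n)%N -> 1 <= lam j /\ lam j <= lam (2 * n).-1.
Proof.
move=> hj; rewrite (lam_half Hpair hj).
have -> : ((2 * n).-1 = (2 * n.-1).+1)%N by lia.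
split.
- have -> : 1 = lam (2 * 0).+1 by rewrite -Hpair ?H0 //; lia.
  apply: mu_le => //; lia.
- apply: mu_le => //; lia.
Qed.

Lemma lam_eq_half
  (Hpair : forall i : nat, (i < n)%N -> lam (2 * i)%N = lam (2 * i).+1)
  (Hstep : forall i : nat, (i.+1 < n)%N -> lam (2 * i).+1 < lam (2 * i).+2) j k :
  (j < 2 * n)%N -> (k < 2 * n)%N -> lam j = lam k -> (j %/ 2 = k %/ 2)%N.
Proof.
move=> hj hk; rewrite (lam_half Hpair hj) (lam_half Hpair hk) => e.
case: (ltngtP (j %/ 2) (k %/ 2)) => // h.
- have := mu_lt Hpair Hstep h (ltac:(lia)); by rewrite e ltxx.
- have := mu_lt Hpair Hstep h (ltac:(lia)); by rewrite e ltxx.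
Qed.
End H3.

Section H4.
Variable R : realType.

Lemma pw (lj lk ll Dsq A B : R) :
  (lj = lk -> Dsq <= A) -> (lj = ll -> Dsq <= B) ->
  0 <= Dsq -> 0 <= A -> 0 <= B ->
  (if lk < ll then Dsq else 0) <=
  (if (lj < lk) && (lk < ll) then Dsq else 0)
  + (if (lk < lj) && (lj < ll) then Dsq else 0)
  + (if (lk < ll) && (ll < lj) then Dsq else 0)
  + (if lj == lk then A else 0) + (if lj == ll then B else 0).
Proof.
move=> HA HB h0 hA hB.
case: (ltrgtP lj lk) => h1; case: (ltrgtP lj ll) => h2; case: (ltrgtP lk ll) => h3 /=.
all: try (move: (HA h1) => ?); try (move: (HB h2) => ?).
all: try lra.
all: try (subst; rewrite ?ltxx ?eqxx /=; lra).
Qed.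
End H4.

Section H5.
Variable R : realType.

Lemma pairsum n (f : nat -> R) :
  \sum_(j < 2 * n) f j = \sum_(i < n) (f (2 * i)%N + f (2 * i).+1).
Proof.
elim: n => [|n IH]; first by rewrite muln0 !big_ord0.
have -> : (2 * n.+1 = (2 * n).+2)%N by lia.
rewrite !big_ord_recr /= IH addrA.
by [].
Qed.
End H5.

Section H6.
Variable R : realType.

Lemma EQsum n (lam x z : nat -> R)
  (hpair : forall i : nat, (i < n)%N -> lam (2 * i)%N = lam (2 * i).+1)
  (heq : forall j k, (j < 2 * n)%N -> (k < 2 * n)%N -> lam j = lam k -> (j %/ 2 = k %/ 2)%N) :
  \sum_(j < 2 * n) \sum_(k < 2 * n)
     (if lam j == lam k then (x j * z k - x k * z j) ^+ 2 else 0)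
  = 2 * \sum_(i < n) (x (2 * i).+1 * z (2 * i)%N - x (2 * i)%N * z (2 * i).+1) ^+ 2.
Proof.
have ne : forall a b, (a < 2 * n)%N -> (b < 2 * n)%N -> (a %/ 2 <> b %/ 2)%N ->
   (lam a == lam b) = false.
  move=> a b ha hb hab; apply/negbTE/eqP => e; apply: hab; exact: heq.
rewrite (pairsum n (fun j => \sum_(k < 2 * n)
     (if lam j == lam k then (x j * z k - x k * z j) ^+ 2 else 0))).
rewrite mulr_sumr; apply: eq_bigr => i _.
have hi := ltn_ord i.
rewrite (pairsum n (fun k => (if lam (2 * i)%N == lam k then (x (2 * i)%N * z k - x k * z (2 * i)%N) ^+ 2 else 0))).
rewrite (pairsum n (fun k => (if lam (2 * i).+1 == lam k then (x (2 * i).+1 * z k - x k * z (2 * i).+1) ^+ 2 else 0))).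
rewrite -big_split /= (bigD1 i) //= big1 => [|c hc].
  rewrite !eqxx (hpair _ hi) eqxx; ring.
have hc' : (c <> i :> nat) by move=> e; move/eqP: hc; apply; exact: val_inj.
have hcn := ltn_ord c.
rewrite !ne; first (by rewrite !addr0); lia.
Qed.
End H6.

Section H7.
Variable R : realType.

Lemma delta_bound (u v lm L eta : R) : 0 < v -> v < u -> u < L * v ->
  1 <= lm -> lm <= L -> eta <= `|u / v - lm| -> 0 < eta ->
  (eta / L ^+ 2) ^+ 2 <= (lm^-1 - v / u) ^+ 2.
Proof.
move=> hv hvu huL h1 hL he heta.
have hu : 0 < u by lra.
have hlm : 0 < lm by lra.
have hL0 : 0 < L by lra.
set t := v / (lm * u).
have ht : 0 < t by rewrite /t divr_gt0 // mulr_gt0.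
have e : lm^-1 - v / u = (u / v - lm) * t.
  rewrite /t; field; rewrite ?gt_eqF ?lt0r_neq0 //; lra.
have hLt : (L ^+ 2)^-1 <= t.
  have e2 : t - (L ^+ 2)^-1 = (L ^+ 2 * v - lm * u) / (lm * u * L ^+ 2).
    rewrite /t; field; apply/and3P; split; apply/negP => /eqP; lra.
  have : 0 <= t - (L ^+ 2)^-1.
    rewrite e2; apply: divr_ge0; last by apply: mulr_ge0; nra.
    nra.
  lra.
have hb : eta / L ^+ 2 <= `|lm^-1 - v / u|.
  rewrite e normrM (gtr0_norm ht).
  apply: (@le_trans _ _ (eta * t)); first by apply: ler_wpM2l; lra.
  apply: ler_wpM2r; lra.
have hc : 0 <= eta / L ^+ 2 by apply: divr_ge0; nra.
rewrite -(real_normK (num_real (lm^-1 - v / u))).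
nra.
Qed.
End H7.

Unset Implicit Arguments. Set Strict Implicit.

Lemma Deq1 (R : realType) (lam x z : nat -> R) j k l : lam j = lam k ->
  Dd lam x z j k l ^+ 2 = x l ^+ 2 * ((lam k)^-1 - (lam l)^-1) ^+ 2 * (x j * z k - x k * z j) ^+ 2.
Proof. move=> e; rewrite /Dd /wv e; ring. Qed.

Lemma Deq2 (R : realType) (lam x z : nat -> R) j k l : lam j = lam l ->
  Dd lam x z j k l ^+ 2 = x k ^+ 2 * ((lam l)^-1 - (lam k)^-1) ^+ 2 * (x j * z l - x l * z j) ^+ 2.
Proof. move=> e; rewrite /Dd /wv e; ring. Qed.

Lemma Dsym12 (R : realType) (lam x z : nat -> R) j k l :
  Dd lam x z j k l ^+ 2 = Dd lam x z k j l ^+ 2.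
Proof. rewrite /Dd; ring. Qed.

Lemma Dsym123 (R : realType) (lam x z : nat -> R) j k l :
  Dd lam x z j k l ^+ 2 = Dd lam x z k l j ^+ 2.
Proof. rewrite /Dd; ring. Qed.

Theorem propositionA3 (R : realType) (n : nat) (lam : nat -> R) :
  (4 <= n)%N ->
  lam 0%N = 1 ->
  (forall i : nat, (i < n)%N -> lam (2 * i)%N = lam (2 * i).+1) ->
  (forall i : nat, (i.+1 < n)%N -> lam (2 * i).+1 < lam (2 * i).+2) ->
  forall eta : R, 0 < eta ->
  exists c1 : R, 0 < c1 /\
    forall u v : R,
      (0 < v /\ v < u /\ u < lam (2 * n).-1 * v) ->
      (forall i : nat, (i < n)%N -> eta <= `| u / v - lam (2 * i).+1 |) ->
      forall x : nat -> R,
        sqn (2 * n) x = u -> sqnm (2 * n) lam x = v ->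
      forall z : nat -> R,
        ip (2 * n) z x = 0 -> ipm (2 * n) lam z x = 0 ->
        (\sum_(k < 2 * n) \sum_(l < 2 * n)
           \sum_(m < 2 * n | (lam k < lam l) && (lam l < lam m))
             (ip (2 * n) (TJ lam k l m x) z) ^+ 2 / (sqn (2 * n) x) ^+ 2)
        + (\sum_(i < n) (ip (2 * n) (Rvec i x) z) ^+ 2 / sqn (2 * n) x)
        >= c1 * sqn (2 * n) z.
Proof.
move=> hn H0 Hpair Hstep eta heta.
set L := lam (2 * n).-1.
have hL1 : 1 <= L by have [] := lam_bounds H0 Hpair Hstep (j := (2 * n).-1) (ltac:(lia)).
set d2 := (eta / L ^+ 2) ^+ 2.
have hd2 : 0 < d2.
  rewrite /d2 exprn_gt0 // divr_gt0 // exprn_gt0 //; lra.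
exists (d2 / 4); split; first by rewrite divr_gt0.
move=> u v [hv [hvu huL]] hdist x hu hvx z hzx hzw.
have hu0 : 0 < u by lra.
have hinv : forall l, (l < 2 * n)%N -> 0 < (lam l)^-1 /\ (lam l)^-1 <= 1.
  move=> l hl; have [h1 _] := lam_bounds H0 Hpair Hstep hl.
  split; first by rewrite invr_gt0; lra.
  by rewrite invf_le1 //; lra.
have hdl : forall l, (l < 2 * n)%N -> d2 <= ((lam l)^-1 - v / u) ^+ 2.
  move=> l hl; have [h1 h2] := lam_bounds H0 Hpair Hstep hl.
  apply: delta_bound hv hvu huL h1 h2 _ heta.
  rewrite (lam_half Hpair hl); apply: hdist; lia.
have hX : u = \sum_(l < 2 * n) x l ^+ 2.
  by rewrite -hu /sqn /ip; apply: eq_bigr => l _; rewrite expr2.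
have hsum0 : \sum_(l < 2 * n) x l ^+ 2 * ((lam l)^-1 - v / u) = 0.
  have -> : \sum_(l < 2 * n) x l ^+ 2 * ((lam l)^-1 - v / u) =
     sqnm (2 * n) lam x - v / u * sqn (2 * n) x.
    rewrite /sqnm /ipm /sqn /ip mulr_sumr -sumrB; apply: eq_bigr => l _; ring.
  rewrite hvx hu; field; lra.
set Pf := fun k l : nat => (x k * wv lam x l - x l * wv lam x k) ^+ 2.
have hPsum : 2 * u * (d2 * u) <= \sum_(k < 2 * n) \sum_(l < 2 * n) Pf k l.
  rewrite /Pf (Psum _ _ _ (v / u)) hsum0 expr2 mulr0 mulr0 subr0 -hX.
  apply: ler_wpM2l; first lra.
  rewrite hX mulr_sumr; apply: ler_sum => l _.
  rewrite mulrC; apply: ler_wpM2l; first exact: sqr_ge0.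
  rewrite -hX; exact: hdl.
set Ph := \sum_(k < 2 * n) \sum_(l < 2 * n) (if lam k < lam l then Pf k l else 0).
have hhalf : \sum_(k < 2 * n) \sum_(l < 2 * n) Pf k l = 2 * Ph.
  have e : forall k l : nat, Pf k l =
     (if lam k < lam l then Pf k l else 0) + (if lam l < lam k then Pf l k else 0).
    move=> k l; case: (ltrgtP (lam k) (lam l)) => h.
    - by rewrite addr0.
    - rewrite add0r /Pf; ring.
    - rewrite addr0 /Pf /wv h; ring.
  under eq_bigr => k _ do under eq_bigr => l _ do rewrite e.
  under eq_bigr => k _ do rewrite big_split /=.
  rewrite big_split /= [X in _ + X = _]exchange_big /=.
  rewrite /Ph; ring.
have hLHS : sqn (2 * n) z * Ph <= \sum_(j < 2 * n) \sum_(k < 2 * n) \sum_(l < 2 * n)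
     (if lam k < lam l then Dd lam x z j k l ^+ 2 else 0).
  rewrite exchange_big /=.
  under eq_bigr => k _ do rewrite exchange_big /=.
  rewrite mulr_sumr; apply: ler_sum => k _; rewrite mulr_sumr; apply: ler_sum => l _.
  case: ifP => _; last by rewrite mulr0 big1.
  rewrite mulrC; exact: sumD_ge.
pose E := fun j k : nat => (x j * z k - x k * z j) ^+ 2.
pose ST := \sum_(a < 2 * n) \sum_(b < 2 * n) \sum_(c < 2 * n)
   (if (lam a < lam b) && (lam b < lam c) then Dd lam x z a b c ^+ 2 else 0).
pose EQ := \sum_(j < 2 * n) \sum_(k < 2 * n) (if lam j == lam k then E j k else 0).
have sT2 : \sum_(j < 2 * n) \sum_(k < 2 * n) \sum_(l < 2 * n)
   (if (lam k < lam j) && (lam j < lam l) then Dd lam x z j k l ^+ 2 else 0) = ST.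
  rewrite exchange_big; apply: eq_bigr => k _; apply: eq_bigr => j _;
  apply: eq_bigr => l _; by rewrite Dsym12.
have sT3 : \sum_(j < 2 * n) \sum_(k < 2 * n) \sum_(l < 2 * n)
   (if (lam k < lam l) && (lam l < lam j) then Dd lam x z j k l ^+ 2 else 0) = ST.
  rewrite exchange_big /=; under eq_bigr => k _ do rewrite exchange_big /=.
  apply: eq_bigr => k _; apply: eq_bigr => l _;
  apply: eq_bigr => j _; by rewrite Dsym123.
have sT4 : \sum_(j < 2 * n) \sum_(k < 2 * n) \sum_(l < 2 * n)
   (if lam j == lam k then x l ^+ 2 * E j k else 0) = u * EQ.
  rewrite /EQ mulr_sumr; apply: eq_bigr => j _; rewrite mulr_sumr; apply: eq_bigr => k _.
  case: ifP => _; last by rewrite mulr0 big1.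
  by rewrite -mulr_suml -hX.
have sT5 : \sum_(j < 2 * n) \sum_(k < 2 * n) \sum_(l < 2 * n)
   (if lam j == lam l then x k ^+ 2 * E j l else 0) = u * EQ.
  rewrite -sT4; apply: eq_bigr => j _; exact: exchange_big.
have hpw : \sum_(j < 2 * n) \sum_(k < 2 * n) \sum_(l < 2 * n)
     (if lam k < lam l then Dd lam x z j k l ^+ 2 else 0)
   <= ST + ST + ST + u * EQ + u * EQ.
  rewrite -{2}sT2 -{2}sT3 -{1}sT4 -sT5 {1}/ST.
  rewrite -!big_split /=.
  under [X in _ <= X]eq_bigr => j _ do rewrite -!big_split /=.
  under [X in _ <= X]eq_bigr => j _ do under eq_bigr => k _ do rewrite -!big_split /=.
  apply: ler_sum => j _; apply: ler_sum => k _; apply: ler_sum => l _.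
  have [hj1 hj2] := hinv j (ltn_ord j).
  have [hk1 hk2] := hinv k (ltn_ord k).
  have [hl1 hl2] := hinv l (ltn_ord l).
  apply: pw.
  - move=> e; rewrite Deq1 //.
    have hxe : 0 <= x l ^+ 2 * E j k by rewrite mulr_ge0 ?sqr_ge0.
    have ht : ((lam k)^-1 - (lam l)^-1) ^+ 2 <= 1 by nra.
    rewrite -/(E j k); nra.
  - move=> e; rewrite Deq2 //.
    have hxe : 0 <= x k ^+ 2 * E j l by rewrite mulr_ge0 ?sqr_ge0.
    have ht : ((lam l)^-1 - (lam k)^-1) ^+ 2 <= 1 by nra.
    rewrite -/(E j l); nra.
  - exact: sqr_ge0.
  - by rewrite mulr_ge0 ?sqr_ge0.
  - by rewrite mulr_ge0 ?sqr_ge0.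
pose Sr := \sum_(i < n) (x (2 * i).+1 * z (2 * i)%N - x (2 * i)%N * z (2 * i).+1) ^+ 2.
have hEQ : EQ = 2 * Sr.
  apply: EQsum => //; move=> j k hj hk.
exact (@lam_eq_half R n lam Hpair Hstep j k hj hk).
have eR : \sum_(i < n) (ip (2 * n) (Rvec i x) z) ^+ 2 / sqn (2 * n) x = Sr / u.
  rewrite hu /Sr mulr_suml; apply: eq_bigr => i _; rewrite ip_Rvec //.
  have := ltn_ord i; lia.
have eST : \sum_(k < 2 * n) \sum_(l < 2 * n)
           \sum_(m < 2 * n | (lam k < lam l) && (lam l < lam m))
             (ip (2 * n) (TJ lam k l m x) z) ^+ 2 / (sqn (2 * n) x) ^+ 2 = ST / u ^+ 2.
  rewrite hu /ST mulr_suml; apply: eq_bigr => k _; rewrite mulr_suml; apply: eq_bigr => l _.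
  rewrite mulr_suml big_mkcond; apply: eq_bigr => m _ /=.
  case: ifP => _; last by rewrite mul0r.
  by rewrite ip_TJ // sqrrN.
rewrite eST eR.
have hST0 : 0 <= ST.
  apply: sumr_ge0 => a _; apply: sumr_ge0 => b _; apply: sumr_ge0 => c _.
  case: ifP => _ //; exact: sqr_ge0.
have hSr0 : 0 <= Sr by apply: sumr_ge0 => i _; exact: sqr_ge0.
have hZ : 0 <= sqn (2 * n) z.
  apply: sumr_ge0 => l _; rewrite -expr2; exact: sqr_ge0.
have hPh : d2 * u ^+ 2 <= Ph by rewrite expr2; nra.
have key : d2 * u ^+ 2 * sqn (2 * n) z <= 4 * (ST + u * Sr).
  have h1 : sqn (2 * n) z * Ph <= 3 * ST + 4 * u * Sr.
    apply: (le_trans hLHS); apply: (le_trans hpw); rewrite hEQ; lra.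
  nra.
have -> : ST / u ^+ 2 + Sr / u = (ST + u * Sr) / u ^+ 2 by field; lra.
rewrite ler_pdivlMr; last by rewrite exprn_gt0.
nra.
Qed.
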